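(* Let $A\in\mathbb R^{N\times N}$ be a non-singular $M$-matrix and let $p<1$. If $x\in\mathbb R^N$ with $x>0$ satisfies $Ax\le x^p$ and $y\in\mathbb R^N$ with $y>0$ satisfies $Ay\ge y^p$, then $x\le y$. In particular, the equation $Ax=x^p$ has a unique solution $x\in\mathbb R^N$ with $x>0$.
   Context: Inequalities between vectors/matrices are componentwise; for $x\in(0,\infty)^N$, $x^p:=(x_1^p,\dots,x_N^p)^\top$. A matrix $A\in\mathbb R^{N\times N}$ is a $Z$-matrix if $A_{ij}\le 0$ for all $i\neq j$. A $Z$-matrix $A$ is an $M$-matrix if $A=s\,\mathrm{Id}-B$ for some matrix $B\ge 0$ and some $s\in\mathbb R$ with $s\ge\rho(B)$ ($\rho(B)$ the spectral radius); it is a non-singular $M$-matrix if in addition it is invertible. *)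

(* Defs.v *)
From HB Require Import structures.
From mathcomp Require Import all_boot all_order all_algebra.
From mathcomp Require Import complex.
From mathcomp Require Import all_classical all_reals all_analysis.
Set Implicit Arguments. Unset Strict Implicit. Unset Printing Implicit Defensive.
Import Order.TTheory GRing.Theory Num.Theory ComplexField.
Local Open Scope ring_scope.
Local Open Scope classical_set_scope.

Definition vle (R : realType) (N : nat) (x y : 'cV[R]_N) : Prop :=
  forall i, x i 0 <= y i 0.

Definition vpos (R : realType) (N : nat) (x : 'cV[R]_N) : Prop :=
  forall i, 0 < x i 0.

Definition vpow (R : realType) (N : nat) (x : 'cV[R]_N) (p : R) : 'cV[R]_N :=
  map_mx (fun a => a `^ p) x.

Definition cmodulus (R : realType) (z : R[i]) : R :=
  Num.sqrt (complex.Re z ^+ 2 + complex.Im z ^+ 2).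

Definition spectral_radius (R : realType) (N : nat) (B : 'M[R]_N) : R :=
  sup [set r : R | exists l : R[i],
         eigenvalue (map_mx (fun a : R => (a%:C)%C) B) l /\ r = cmodulus l].

Definition Zmatrix (R : realType) (N : nat) (A : 'M[R]_N) : Prop :=
  forall i j, i != j -> A i j <= 0.

Definition Mmatrix (R : realType) (N : nat) (A : 'M[R]_N) : Prop :=
  Zmatrix A /\
  exists (s : R) (B : 'M[R]_N),
    (forall i j, 0 <= B i j) /\ A = s%:M - B /\ spectral_radius B <= s.

Definition nonsingular_Mmatrix (R : realType) (N : nat) (A : 'M[R]_N) : Prop :=
  Mmatrix A /\ A \in unitmx.

(* Main.v *)
Require Import Defs.
From HB Require Import structures.
From mathcomp Require Import all_boot all_order all_algebra.
From mathcomp Require Import complex.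
From mathcomp Require Import all_classical all_reals all_analysis.
From mathcomp Require Import ring lra.
Import Order.TTheory GRing.Theory Num.Theory.
Local Open Scope ring_scope.
Import numFieldNormedType.Exports.
Lemma argmax_ex (R : realType) N (F : 'I_N -> R) (i0 : 'I_N) :
  exists k, forall j, F j <= F k.
Proof.
case: (@arg_maxP _ R _ i0 xpredT F erefl) => k _ H; exists k => j; exact: H.
Qed.
Lemma argmin_ex (R : realType) N (F : 'I_N -> R) (i0 : 'I_N) :
  exists k, forall j, F k <= F j.
Proof.
case: (@arg_minP _ R _ i0 xpredT F erefl) => k _ H; exists k => j; exact: H.
Qed.
Lemma zsum (R : realType) N (C : 'M[R]_N) (k : 'I_N) (d : 'I_N -> R) :
  Zmatrix C -> (forall j, 0 <= d j) -> d k = 0 -> \sum_j C k j * d j <= 0.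
Proof.
move=> ZC d0 dk; rewrite (bigD1 k) //= dk mulr0 add0r.
apply: sumr_le0 => j jk; apply: mulr_le0_ge0 => //; apply: ZC; by rewrite eq_sym.
Qed.
Lemma mulmx_col (R : realType) N (A : 'M[R]_N) (x : 'cV[R]_N) i :
  (A *m x) i 0 = \sum_j A i j * x j 0.
Proof. by rewrite mxE. Qed.
Lemma vpowE (R : realType) N (x : 'cV[R]_N) p i : vpow x p i 0 = x i 0 `^ p.
Proof. by rewrite /vpow mxE. Qed.

Lemma comparison (R : realType) N (A : 'M[R]_N) (p : R) (x y : 'cV[R]_N) :
  Zmatrix A -> p < 1 -> vpos x -> vle (A *m x) (vpow x p) ->
  vpos y -> vle (vpow y p) (A *m y) -> vle x y.
Proof.
move=> ZA p1 xp Hx yp Hy i.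
have [k Hk] := @argmax_ex R N (fun j => x j 0 / y j 0) i.
set t := x k 0 / y k 0 in Hk.
have ht j : x j 0 <= t * y j 0 by rewrite -ler_pdivrMr //; exact: Hk.
have t0 : 0 < t by rewrite /t divr_gt0.
have xk : x k 0 = t * y k 0 by rewrite /t divfK // gt_eqF.
suff t1 : t <= 1.
  have := ht i; have := yp i; nra.
rewrite leNgt; apply/negP => t1.
have hs : \sum_j A k j * (t * y j 0 - x j 0) <= 0.
  apply: zsum => //; first by move=> j; rewrite subr_ge0.
  by rewrite xk subrr.
have e1 : \sum_j A k j * (t * y j 0 - x j 0) = t * (A *m y) k 0 - (A *m x) k 0.
  rewrite !mulmx_col mulr_sumr -sumrB; apply: eq_bigr => j _; ring.
have h1 := Hx k; have h2 := Hy k.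
rewrite vpowE in h1; rewrite vpowE in h2.
rewrite xk powRM ?(ltW t0) ?(ltW (yp k)) // in h1.
have ypk := powR_gt0 p (yp k).
have : t * y k 0 `^ p <= t `^ p * y k 0 `^ p.
  have := ler_wpM2l (ltW t0) h2; lra.
rewrite ler_pM2r // -ler_ln ?posrE ?powR_gt0 // ln_powR => H.
have := ln_gt0 t1.
nra.
Qed.

Lemma inv_pos (R : realType) N (C : 'M[R]_N) (v z : 'cV[R]_N) :
  Zmatrix C -> vpos v -> (forall i, 0 < (C *m v) i 0) ->
  (forall i, 0 <= (C *m z) i 0) -> forall i, 0 <= z i 0.
Proof.
move=> ZC vp Cv Cz i.
have [k Hk] := @argmin_ex R N (fun j => z j 0 / v j 0) i.
set t := z k 0 / v k 0 in Hk.
have ht j : t * v j 0 <= z j 0 by rewrite -ler_pdivlMr //; exact: Hk.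
have zk : z k 0 = t * v k 0 by rewrite /t divfK // gt_eqF.
case: (lerP 0 t) => t0.
  have := ht i; have := vp i; nra.
have hs : \sum_j C k j * (z j 0 - t * v j 0) <= 0.
  apply: zsum => //; first by move=> j; rewrite subr_ge0.
  by rewrite zk subrr.
have e1 : \sum_j C k j * (z j 0 - t * v j 0) = (C *m z) k 0 - t * (C *m v) k 0.
  rewrite !mulmx_col mulr_sumr -sumrB; apply: eq_bigr => j _; ring.
have := Cz k; have := Cv k; nra.
Qed.

Lemma spec_ub (R : realType) N (B : 'M[R]_N) :
  has_ubound [set r : R | exists l : R[i],
         eigenvalue (map_mx (fun a : R => (a%:C)%C) B) l /\ r = cmodulus l].
Proof.
set Bc := map_mx _ B.
have [rs Hrs] := closed_field_poly_normal (char_poly Bc).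
exists (\sum_(z <- rs) cmodulus z) => r [l [ev ->]].
have lr : l \in rs.
  rewrite -root_prod_XsubC; move: ev.
  by rewrite eigenvalue_root_char Hrs (monicP (char_poly_monic _)) scale1r.
rewrite (big_rem l) //= lerDl; apply: sumr_ge0 => z _; exact: sqrtr_ge0.
Qed.

Lemma unit_shift (R : realType) N (A : 'M[R]_N) (t : R) :
  nonsingular_Mmatrix A -> 0 <= t -> (A + t%:M) \in unitmx.
Proof.
move=> [[ZA [s [B [B0 [HA Hrho]]]]] Au].
rewrite le0r => /orP [/eqP -> | t0]; first by rewrite raddf0 addr0.
set u := s + t.
have -> : A + t%:M = u%:M - B by rewrite HA /u raddfD /= addrAC.
apply: contraT; rewrite unitmxE unitfE negbK => /det0P [v v0 Hv].
have vB : v *m B = u *: v.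
  by apply/eqP; rewrite eq_sym -subr_eq0 -mul_mx_scalar -mulmxBr Hv.
set f := real_complex R.
have ev : eigenvalue (map_mx (fun a : R => (a%:C)%C) B) (f u).
  apply/eigenvalueP; exists (map_mx f v).
    by rewrite -map_mxM vB map_mxZ.
  by rewrite map_mx_eq0.
have hin : [set r : R | exists l : R[i],
         eigenvalue (map_mx (fun a : R => (a%:C)%C) B) l /\ r = cmodulus l]%classic
         (cmodulus (f u)) by exists (f u).
have := ub_le_sup (@spec_ub R N B) hin.
rewrite -/(spectral_radius B) => H.
have : cmodulus (f u) = `|u|.
  by rewrite /cmodulus /= expr0n /= addr0 sqrtr_sqr.
have := ler_norm u.
rewrite /u in H *. lra.
Qed.

Definition Qp {R : realType} {N} (A : 'M[R]_N) (t : R) :=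
  exists v : 'cV[R]_N, vpos v /\ forall i, 0 < ((A + t%:M) *m v) i 0.

Lemma shiftE (R : realType) N (A : 'M[R]_N) (t : R) (v : 'cV[R]_N) i :
  ((A + t%:M) *m v) i 0 = (A *m v) i 0 + t * v i 0.
Proof. by rewrite mulmxDl mul_scalar_mx mxE [(t *: v) i 0]mxE. Qed.

Lemma Q_up (R : realType) N (A : 'M[R]_N) (t t' : R) :
  Qp A t -> t <= t' -> Qp A t'.
Proof.
move=> [v [vp Hv]] tt; exists v; split => // i.
have := Hv i; rewrite !shiftE; have := vp i; nra.
Qed.

Lemma Q_large (R : realType) N (A : 'M[R]_N) :
  Qp A (1 + \sum_i \sum_j `|A i j|).
Proof.
exists (const_mx 1); split; first by move=> i; rewrite mxE.
move=> i; rewrite shiftE mxE [const_mx 1 i 0]mxE mulr1.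
have h1 : \sum_j - `|A i j| <= \sum_j A i j * (const_mx 1 : 'cV[R]_N) j 0.
  apply: ler_sum => j _; rewrite mxE mulr1.
  by rewrite lerNl -normrN ler_norm.
rewrite sumrN in h1.
have h2 : \sum_j `|A i j| <= \sum_i \sum_j `|A i j|.
  rewrite [X in _ <= X](bigD1 i) //= lerDl; apply: sumr_ge0 => k _.
  by apply: sumr_ge0 => j _.
lra.
Qed.

Lemma Zshift (R : realType) N (A : 'M[R]_N) (t : R) :
  Zmatrix A -> Zmatrix (A + t%:M).
Proof. by move=> ZA i j ij; rewrite !mxE (negbTE ij) mulr0n addr0; apply: ZA. Qed.

Lemma Q_tau (R : realType) N (A : 'M[R]_N) (tau : R) :
  nonsingular_Mmatrix A -> 0 <= tau -> (forall h, 0 < h -> Qp A (tau + h)) ->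
  Qp A tau.
Proof.
move=> nsA t0 Hh.
have ZA : Zmatrix A by case: nsA => [[]].
set C := A + tau%:M.
have ZC : Zmatrix C := @Zshift R N A tau ZA.
have Cu : C \in unitmx := @unit_shift R N A tau nsA t0.
set one : 'cV[R]_N := const_mx 1.
set Ci := invmx C.
set w := Ci *m one.
have Cw : C *m w = one by rewrite /w mulmxA mulmxV // mul1mx.
set M := 1 + \sum_i \sum_j `|Ci i j|.
set W := \sum_i `|w i 0|.
have CiM i j : `|Ci i j| <= M.
  have h1 : `|Ci i j| <= \sum_j `|Ci i j|.
    rewrite [X in _ <= X](bigD1 j) //= lerDl; exact: sumr_ge0.
  have h2 : \sum_j `|Ci i j| <= \sum_i \sum_j `|Ci i j|.
    rewrite [X in _ <= X](bigD1 i) //= lerDl; apply: sumr_ge0 => k _.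
    exact: sumr_ge0.
  rewrite /M; lra.
have M1 : 1 <= M.
  rewrite /M lerDl; apply: sumr_ge0 => k _; exact: sumr_ge0.
have wW i : `|w i 0| <= W.
  rewrite /W [X in _ <= X](bigD1 i) //= lerDl; exact: sumr_ge0.
have key : forall h, 0 < h -> N%:R * h * M <= 1/2 ->
    forall i, - (2 * h * M * W) <= w i 0.
  move=> h h0 hs i.
  have [v [vp Hv]] := Hh h h0.
  set Ch := A + (tau + h)%:M.
  have Chu : Ch \in unitmx := @unit_shift R N A _ nsA (addr_ge0 t0 (ltW h0)).
  set wh := invmx Ch *m one.
  have Chw : Ch *m wh = one by rewrite /wh mulmxA mulmxV // mul1mx.
  have whp : forall j, 0 <= wh j 0.
    apply: (@inv_pos R N _ _ _ (@Zshift R N A _ ZA) vp Hv) => j.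
    by rewrite Chw mxE.
  have ChE : Ch = C + h%:M by rewrite /Ch /C raddfD addrA.
  have wE : w = wh + h *: (Ci *m wh).
    rewrite /w -Chw ChE mulmxA mulmxDr mulVmx // mul_mx_scalar mulmxDl mul1mx.
    by rewrite scalemxAl.
  have wEi j : w j 0 = wh j 0 + h * \sum_k Ci j k * wh k 0.
    by rewrite wE !mxE.
  set S := \sum_j wh j 0.
  have S0 : 0 <= S by apply: sumr_ge0 => j _.
  have bnd j : `|\sum_k Ci j k * wh k 0| <= M * S.
    rewrite /S mulr_sumr; apply: le_trans (ler_norm_sum _ _ _) _.
    apply: ler_sum => k _; rewrite normrM (ger0_norm (whp k)).
    by apply: ler_wpM2r; [exact: whp | exact: CiM].
  have whb j : wh j 0 <= `|w j 0| + h * (M * S).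
    have e1 := wEi j; have e2 := bnd j.
    set X := \sum_k Ci j k * wh k 0 in e1 e2.
    have e3 : - X <= `|X| by rewrite -normrN ler_norm.
    have e4 := ler_norm (w j 0).
    have e5 : h * (- X) <= h * (M * S) by nra.
    lra.
  have SW : S <= W + N%:R * (h * (M * S)).
    have H1 : S <= \sum_j (`|w j 0| + h * (M * S)).
      by apply: ler_sum => j _; exact: whb.
    by rewrite big_split /= sumr_const card_ord -mulr_natl in H1.
  have S2 : S <= 2 * W.
    have : N%:R * h * M * S <= 1/2 * S by apply: ler_wpM2r.
    have : N%:R * (h * (M * S)) = N%:R * h * M * S by ring.
    lra.
  have e1 := wEi i; have e2 := bnd i.
  set X := \sum_k Ci i k * wh k 0 in e1 e2.
  have e3 : - `|X| <= X by rewrite lerNl -normrN ler_norm.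
  have e5 : h * (M * S) <= h * (M * (2 * W)).
    have : M * S <= M * (2 * W) by nra.
    nra.
  have e6 : h * (- (M * S)) <= h * X.
    have : - (M * S) <= X by lra.
    nra.
  have := whp i; lra.
have wp i : 0 <= w i 0.
  rewrite leNgt; apply/negP => wi.
  set a := - w i 0.
  have a0 : 0 < a by rewrite /a oppr_gt0.
  have aW : a <= W by have := wW i; have := ler_norm (- w i 0); rewrite normrN /a; lra.
  set n : R := N%:R.
  have n0 : 0 <= n by rewrite /n ler0n.
  have W0 : 0 <= W by lra.
  have den0 : 0 < 4 * M * (W + 1) * (n + 1).
    apply: mulr_gt0; last lra.
    apply: mulr_gt0; last lra.
    apply: mulr_gt0; lra.
  set h := a / (4 * M * (W + 1) * (n + 1)).
  have h0 : 0 < h by apply: divr_gt0.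
  have hden : h * (4 * M * (W + 1) * (n + 1)) = a by rewrite /h divfK // gt_eqF.
  have hM : 0 < h * M by apply: mulr_gt0 => //; lra.
  have hs : n * h * M <= 1/2.
    have : n * (h * M) * (4 * (W + 1)) <= a.
      rewrite -hden.
      have -> : h * (4 * M * (W + 1) * (n + 1)) = (n + 1) * (h * M) * (4 * (W + 1)) by ring.
      apply: ler_wpM2r; first lra.
      apply: ler_wpM2r; lra.
    have : 0 <= n * (h * M) by apply: mulr_ge0; lra.
    nra.
  have := key h h0 hs i.
  have : 2 * h * M * W < a.
    rewrite -hden.
    have -> : h * (4 * M * (W + 1) * (n + 1)) = (h * M) * (4 * (W + 1) * (n + 1)) by ring.
    have -> : 2 * h * M * W = (h * M) * (2 * W) by ring.
    rewrite ltr_pM2l //; nra.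
  rewrite /a; lra.
exists w; split.
  move=> i; rewrite lt0r wp andbT; apply/eqP => wi0.
  have := @zsum R N C i (fun j => w j 0) ZC wp wi0.
  by rewrite -mulmx_col Cw mxE; lra.
by move=> i; rewrite -/C Cw mxE ltr01.
Qed.

Lemma semipos (R : realType) N (A : 'M[R]_N) :
  nonsingular_Mmatrix A -> exists v, vpos v /\ forall i, 0 < (A *m v) i 0.
Proof.
move=> nsA.
suff [v [vp Hv]] : Qp A 0.
  by exists v; split => // i; have := Hv i; rewrite shiftE mul0r addr0.
set E := [set t : R | 0 <= t /\ Qp A t]%classic.
have En : (E !=set0)%classic.
  exists (1 + \sum_i \sum_j `|A i j|); split; last exact: Q_large.
  apply: addr_ge0 => //; apply: sumr_ge0 => i _; exact: sumr_ge0.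
have El : has_lbound E by exists 0 => t [].
set tau := inf E.
have t0 : 0 <= tau by apply: lb_le_inf => // t [].
have Qt : Qp A tau.
  apply: (@Q_tau R N A tau nsA t0) => h h0.
  have [e [e0 Qe] et] := inf_adherent h0 (conj En El).
  by apply: Q_up Qe _; rewrite -/tau; lra.
case: (lerP tau 0) => tl.
  by have <- : tau = 0 by apply/eqP; rewrite eq_le tl t0.
exfalso.
have [v [vp Hv]] := Qt.
have [eta [eta0 [etat Heta]]] : exists eta, 0 < eta /\ eta < tau /\
    forall i, eta * v i 0 < ((A + tau%:M) *m v) i 0.
  case: (pselect (exists i : 'I_N, True)) => [[i0 _]|none]; last first.
    exists (tau / 2); split; first lra; split; first lra.
    by move=> i; exfalso; apply: none; exists i.
  have [k Hk] := @argmin_ex R N (fun j => ((A + tau%:M) *m v) j 0 / v j 0) i0.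
  set r := ((A + tau%:M) *m v) k 0 / v k 0 in Hk.
  have r0 : 0 < r by rewrite /r divr_gt0.
  have tr0 : 0 < tau + r by lra.
  exists (tau * r / (tau + r)); split; first by apply: divr_gt0 => //; apply: mulr_gt0.
  split.
    rewrite ltr_pdivrMr //; nra.
  move=> i; have := Hk i; rewrite ler_pdivlMr // => Hi.
  have : tau * r / (tau + r) < r by rewrite ltr_pdivrMr //; nra.
  have := vp i; nra.
have : E (tau - eta).
  split; first lra.
  exists v; split => // i; have := Heta i; rewrite !shiftE; lra.
move=> /(ge_inf El); rewrite -/tau; lra.
Qed.

Lemma powR_epsdelta (R : realType) (p b e : R) : 0 < b -> 0 < e ->
  exists2 d : R, 0 < d & forall a : R, `|b - a| < d -> `|b `^ p - a `^ p| < e.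
Proof.
move=> b0 e0.
have hd : derivable (fun a : R => a `^ p) b 1.
  by apply: ex_derive; apply: is_derive1_powR.
have hc : {for b, continuous (fun a : R => a `^ p)}.
  by apply: differentiable_continuous; apply/derivable1_diffP.
have := @cvgr_dist_lt _ R _ _ _ _ _ hc _ e0.
move=> /(_ _)/nbhs_ballP [d /= d0 H]; exists d => // a ha.
Qed.

Lemma zsum2 (R : realType) N (C : 'M[R]_N) (k : 'I_N) (d : 'I_N -> R) :
  Zmatrix C -> (forall j, j != k -> 0 <= d j) -> \sum_j C k j * d j <= C k k * d k.
Proof.
move=> ZC d0; rewrite (bigD1 k) //= gerDl.
apply: sumr_le0 => j jk; apply: mulr_le0_ge0; last exact: d0.
by apply: ZC; rewrite eq_sym.
Qed.

Lemma pow_split (R : realType) (p c : R) : 0 < c -> c = c `^ p * c `^ (1 - p).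
Proof.
move=> c0; rewrite -powRD; last by rewrite implybE (gt_eqF c0) orbT.
by rewrite addrC subrK powRr1 // ltW.
Qed.

Lemma exists_pow_eq (R : realType) (q K : R) : 0 < q -> 0 < K ->
  exists c, 0 < c /\ c `^ q = K.
Proof.
move=> q0 K0; exists (K `^ q^-1); split; first exact: powR_gt0.
by rewrite -powRrM mulVf ?gt_eqF // powRr1 // ltW.
Qed.

Lemma vpowZ (R : realType) N (v : 'cV[R]_N) (c p : R) i :
  0 < c -> vpos v -> vpow (c *: v) p i 0 = c `^ p * v i 0 `^ p.
Proof.
move=> c0 vp; rewrite vpowE mxE powRM //; [exact: ltW | exact: ltW (vp i)].
Qed.

Lemma mulZ (R : realType) N (A : 'M[R]_N) (v : 'cV[R]_N) (c : R) i :
  (A *m (c *: v)) i 0 = c * (A *m v) i 0.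
Proof. by rewrite -scalemxAr mxE. Qed.

Lemma harm (R : realType) (d d2 : R) : 0 < d -> 0 < d2 ->
  0 < d * d2 / (d + d2) /\ d * d2 / (d + d2) < d /\ d * d2 / (d + d2) < d2.
Proof.
move=> d0 d20; have s0 : 0 < d + d2 by lra.
split; first by apply: divr_gt0 => //; apply: mulr_gt0.
by split; rewrite ltr_pdivrMr //; nra.
Qed.

Lemma existence (R : realType) N (A : 'M[R]_N) (p : R) :
  nonsingular_Mmatrix A -> p < 1 -> exists x, vpos x /\ A *m x = vpow x p.
Proof.
move=> nsA p1.
have ZA : Zmatrix A by case: nsA => [[]].
have [v [vp Av]] := @semipos R N A nsA.
have q0 : 0 < 1 - p by lra.
set K := 1 + \sum_i (v i 0 `^ p / (A *m v) i 0).
have Kb i : v i 0 `^ p / (A *m v) i 0 <= K.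
  rewrite /K (bigD1 i) //= addrCA lerDl; apply: addr_ge0 => //.
  apply: sumr_ge0 => j _; apply: divr_ge0; [exact/ltW/powR_gt0 | exact/ltW].
have K0 : 0 < K.
  have : 0 <= \sum_i (v i 0 `^ p / (A *m v) i 0).
    apply: sumr_ge0 => j _; apply: divr_ge0; [exact/ltW/powR_gt0 | exact/ltW].
  rewrite /K; lra.
have [C [C0 CK]] := @exists_pow_eq R (1 - p) K q0 K0.
set y := C *: v.
have yp : vpos y by move=> i; rewrite mxE mulr_gt0.
have Hy : vle (vpow y p) (A *m y).
  move=> i; rewrite vpowZ // mulZ [X in _ <= X * _](@pow_split R p C C0) CK -mulrA.
  apply: ler_wpM2l; first exact/ltW/powR_gt0.
  by rewrite -ler_pdivrMr // Kb.
set K' := 1 + \sum_i ((A *m v) i 0 / v i 0 `^ p).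
have Kb' i : (A *m v) i 0 / v i 0 `^ p <= K'.
  rewrite /K' (bigD1 i) //= addrCA lerDl; apply: addr_ge0 => //.
  apply: sumr_ge0 => j _; apply: divr_ge0; [exact/ltW | exact/ltW/powR_gt0].
have K0' : 0 < K'.
  have : 0 <= \sum_i ((A *m v) i 0 / v i 0 `^ p).
    apply: sumr_ge0 => j _; apply: divr_ge0; [exact/ltW | exact/ltW/powR_gt0].
  rewrite /K'; lra.
have [c [c0 cK]] := @exists_pow_eq R (1 - p) K'^-1 q0 (ltac:(by rewrite invr_gt0)).
set x0 := c *: v.
have x0p : vpos x0 by move=> i; rewrite mxE mulr_gt0.
have Hx0 : vle (A *m x0) (vpow x0 p).
  move=> i; rewrite vpowZ // mulZ [X in X * _ <= _](@pow_split R p c c0) cK -mulrA.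
  apply: ler_wpM2l; first exact/ltW/powR_gt0.
  rewrite mulrC -ler_pdivlMr ?invr_gt0 // invrK mulrC -ler_pdivrMr ?powR_gt0 //.
set S := fun x : 'cV[R]_N => vpos x /\ vle (A *m x) (vpow x p).
have Sx0 : S x0 by [].
have Sle x : S x -> vle x y.
  by move=> [xp Hx]; exact: (@comparison R N A p x y ZA p1 xp Hx yp Hy).
set Ei := fun i => [set r : R | exists x, S x /\ r = x i 0]%classic.
have Esup i : has_sup (Ei i).
  split; first by exists (x0 i 0); exists x0.
  by exists (y i 0) => r [x [Sx ->]]; exact: Sle.
set xs : 'cV[R]_N := \col_i sup (Ei i).
have xsE i : xs i 0 = sup (Ei i) by rewrite mxE.
have xs_ge x i : S x -> x i 0 <= xs i 0.
  by move=> Sx; rewrite xsE; apply: (ub_le_sup (Esup i).2); exists x.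
have xsp : vpos xs by move=> i; exact: lt_le_trans (x0p i) (xs_ge x0 i Sx0).
have xs_adh i e : 0 < e -> exists x, S x /\ xs i 0 - e < x i 0.
  move=> e0; have [r [x [Sx ->]] h] := sup_adherent e0 (Esup i).
  by exists x; rewrite xsE.
have sub i : (A *m xs) i 0 <= xs i 0 `^ p.
  apply/ler_addgt0Pr => e e0.
  have e20 : 0 < e / 2 by lra.
  have [d d0 Hd] := @powR_epsdelta R p _ _ (xsp i) e20.
  set a := `|A i i| + 1.
  have a0 : 0 < a by rewrite /a; have := normr_ge0 (A i i); lra.
  set d2 := e / (2 * a).
  have d20 : 0 < d2 by apply: divr_gt0 => //; lra.
  have ad2 : a * d2 = e / 2.
    by rewrite /d2; field; rewrite gt_eqF.
  have [dl0 [dld dld2]] := @harm R d d2 d0 d20.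
  set dl := d * d2 / (d + d2) in dl0 dld dld2.
  have [x [Sx hx]] := xs_adh i dl dl0.
  have le1 := xs_ge x i Sx.
  have H := @zsum2 R N A i (fun j => xs j 0 - x j 0) ZA
     (fun j _ => ltac:(by rewrite subr_ge0; apply: xs_ge)).
  have eq1 : \sum_j A i j * (xs j 0 - x j 0) = (A *m xs) i 0 - (A *m x) i 0.
    by rewrite !mulmx_col -sumrB; apply: eq_bigr => j _; ring.
  rewrite eq1 /= in H.
  have z2 : A i i * (xs i 0 - x i 0) <= `|A i i| * (xs i 0 - x i 0).
    by apply: ler_wpM2r; [lra | exact: ler_norm].
  have z3 : `|A i i| * (xs i 0 - x i 0) <= e / 2.
    rewrite -ad2; have := normr_ge0 (A i i); rewrite /a; nra.
  have Hx := Sx.2 i; rewrite vpowE in Hx.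
  have hd : `|xs i 0 - x i 0| < d by rewrite ger0_norm; lra.
  have hd2 := Hd _ hd.
  have : x i 0 `^ p - xs i 0 `^ p <= `|xs i 0 `^ p - x i 0 `^ p|.
    by rewrite distrC ler_norm.
  lra.
exists xs; split => //.
apply/matrixP => i k; rewrite (ord1 k) [vpow xs p i 0]vpowE.
apply/eqP; rewrite eq_le sub /=; rewrite leNgt; apply/negP => lt.
set g := xs i 0 `^ p - (A *m xs) i 0.
have g0 : 0 < g / 2 by rewrite /g; lra.
have [d d0 Hd] := @powR_epsdelta R p _ _ (xsp i) g0.
set a := `|A i i| + 1.
have a0 : 0 < a by rewrite /a; have := normr_ge0 (A i i); lra.
set d2 := g / 2 / a.
have d20 : 0 < d2 by apply: divr_gt0.
have ad2 : a * d2 = g / 2 by rewrite /d2 mulrC divfK ?gt_eqF.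
have [dl0 [dld dld2]] := @harm R d d2 d0 d20.
set dl := d * d2 / (d + d2) in dl0 dld dld2.
set x' : 'cV[R]_N := \col_j (xs j 0 + (if j == i then dl else 0)).
have Ax' : forall jj, (A *m x') jj 0 = (A *m xs) jj 0 + A jj i * dl.
  move=> jj; rewrite !mulmx_col; under eq_bigr => kk _ do rewrite mxE mulrDr.
  rewrite big_split /=; congr (_ + _).
  rewrite (bigD1 i) //= eqxx big1 ?addr0 // => kk /negbTE ->; exact: mulr0.
have Sx' : S x'.
  split.
    move=> j; rewrite mxE; case: ifP => _; last by rewrite addr0.
    by apply: addr_gt0.
  move=> j; rewrite Ax' vpowE /x' [X in _ <= X `^ p]mxE -/x'; case: (eqVneq j i) => [->|ji].
    rewrite ?eqxx.
    have hd : `|xs i 0 - (xs i 0 + dl)| < d.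
      by rewrite opprD addrA subrr add0r normrN ger0_norm //; exact: ltW.
    have hd2 := Hd _ hd.
    have : xs i 0 `^ p - (xs i 0 + dl) `^ p <= `|xs i 0 `^ p - (xs i 0 + dl) `^ p|.
      exact: ler_norm.
    have z2 : A i i * dl <= `|A i i| * dl by apply: ler_wpM2r; [lra | exact: ler_norm].
    have z3 : `|A i i| * dl <= g / 2.
      rewrite -ad2; have := normr_ge0 (A i i); rewrite /a; nra.
    have gdef : g = xs i 0 `^ p - (A *m xs) i 0 by []. lra.
  rewrite ?(negbTE ji) addr0.
  have := ZA j i ji; have := sub j; nra.
have := xs_ge x' i Sx'; rewrite mxE eqxx; lra.
Qed.

Theorem proposition3p5 (R : realType) (N : nat) (A : 'M[R]_N) (p : R) :
  nonsingular_Mmatrix A -> p < 1 ->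
  (forall x y : 'cV[R]_N,
      vpos x -> vle (A *m x) (vpow x p) ->
      vpos y -> vle (vpow y p) (A *m y) ->
      vle x y) /\
  (exists! x : 'cV[R]_N, vpos x /\ A *m x = vpow x p).
Proof.
move=> nsA p1.
have ZA : Zmatrix A by case: nsA => [[]].
split.
  move=> x y xp Hx yp Hy; exact: (@comparison R N A p x y ZA p1 xp Hx yp Hy).
have [x [xp Hx]] := @existence R N A p nsA p1.
exists x; split => // x' [xp' Hx'].
apply/matrixP => i k; rewrite (ord1 k); apply/eqP; rewrite eq_le; apply/andP; split.
  apply: (@comparison R N A p x x' ZA p1 xp _ xp') => j; by rewrite ?Hx ?Hx'.
apply: (@comparison R N A p x' x ZA p1 xp' _ xp) => j; by rewrite ?Hx ?Hx'.
Qed.
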